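(* Let $z_1,\dots,z_N\in\mathbb{C}$ (not necessarily distinct) and let $x_i\in\mathbb{S}^2$ with $\pi_{\mathbb{S}^2}(x_i)=z_i$, $1\le i\le N$. Then $$\frac{\prod_{i=1}^N\|x-z_i\|}{\big\|\prod_{i=1}^N(x-z_i)\big\|}=\frac{2^N}{\sqrt{N+1}}\Big(\int_{\mathbb{S}^2}\prod_{i=1}^N|p-x_i|^2\,d\sigma(p)\Big)^{-1/2},$$ where $\|\cdot\|$ is the Bombieri–Weyl norm and $\sigma$ is the normalized surface measure on $\mathbb{S}^2$.
   Context: $\mathbb{S}^2$ is the unit sphere in $\mathbb{R}^3$, $\sigma$ its surface measure with $\sigma(\mathbb{S}^2)=1$, and $\pi_{\mathbb{S}^2}(a,b,c)=\frac{a+ib}{1-c}$ the stereographic projection from the North pole. The Bombieri–Weyl norm of $P(z)=\sum_{i=0}^N a_iz^i$ of degree $N$ is $\|P\|=(\sum_{i=0}^N\binom{N}{i}^{-1}|a_i|^2)^{1/2}$. *)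

(* Defs.v *)
From Stdlib Require Import Reals Lra ClassicalEpsilon.
Open Scope R_scope.

Definition Cx : Type := (R * R)%type.
Definition Cx0 : Cx := (0, 0).
Definition Cx1 : Cx := (1, 0).
Definition Cxadd (u v : Cx) : Cx := (fst u + fst v, snd u + snd v).
Definition Cxopp (u : Cx) : Cx := (- fst u, - snd u).
Definition Cxsub (u v : Cx) : Cx := Cxadd u (Cxopp v).
Definition Cxmul (u v : Cx) : Cx :=
  (fst u * fst v - snd u * snd v, fst u * snd v + snd u * fst v).
Definition Cxnorm2 (u : Cx) : R := fst u ^ 2 + snd u ^ 2.

(* Coefficients (a_0, a_1, ...) of the polynomial prod_{i<n} (X - z i). *)
Fixpoint prod_lin_coef (z : nat -> Cx) (n : nat) (k : nat) : Cx :=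
  match n with
  | O => match k with O => Cx1 | S _ => Cx0 end
  | S m => Cxsub (match k with O => Cx0 | S k' => prod_lin_coef z m k' end)
                 (Cxmul (z m) (prod_lin_coef z m k))
  end.

Definition lin_coef (w : Cx) (k : nat) : Cx :=
  match k with O => Cxopp w | 1%nat => Cx1 | _ => Cx0 end.

Definition bw_norm (N : nat) (a : nat -> Cx) : R :=
  sqrt (sum_f_R0 (fun i => / C N i * Cxnorm2 (a i)) N).

Definition R3 : Type := (R * R * R)%type.
Definition px (p : R3) : R := fst (fst p).
Definition py (p : R3) : R := snd (fst p).
Definition pz (p : R3) : R := snd p.
Definition on_sphere (p : R3) : Prop := px p ^ 2 + py p ^ 2 + pz p ^ 2 = 1.
Definition dist3 (p q : R3) : R :=
  sqrt ((px p - px q) ^ 2 + (py p - py q) ^ 2 + (pz p - pz q) ^ 2).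

(* Stereographic projection from the North pole:
   (a,b,c) |-> (a + i b)/(1 - c), defined for c <> 1. *)
Definition stereo (p : R3) : Cx := (px p / (1 - pz p), py p / (1 - pz p)).

(* Riemann integral of f over [a,b] (0 if f is not Riemann integrable;
   the value does not depend on the integrability proof). *)
Definition RInt (f : R -> R) (a b : R) : R :=
  match excluded_middle_informative
          (exists v, exists pr : Riemann_integrable f a b, RiemannInt pr = v) with
  | left H => proj1_sig (constructive_indefinite_description _ H)
  | right _ => 0
  end.

(* Integral against the normalized surface measure sigma on S^2
   (sigma(S^2) = 1), written in spherical coordinates:
   int f dsigma = 1/(4 pi) int_0^{2pi} int_0^pi f(sin t cos s, sin t sin s, cos t) sin t dt ds. *)
Definition sphere_integral (f : R3 -> R) : R :=
  / (4 * PI) *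
  RInt (fun s => RInt (fun t => f (sin t * cos s, sin t * sin s, cos t) * sin t) 0 PI)
       0 (2 * PI).

Fixpoint prodR (n : nat) (f : nat -> R) : R :=
  match n with O => 1 | S m => prodR m f * f m end.

(* Main.v *)
Require Import Defs.
From Stdlib Require Import Reals Lra Lia FunctionalExtensionality ClassicalEpsilon.
From Coquelicot Require Import Coquelicot.
From Stdlib Require Import Factorial.
Open Scope R_scope.

Lemma RInt_bridge (f : R -> R) a b v : is_RInt f a b v -> Defs.RInt f a b = v.
Proof.
  intros H. unfold Defs.RInt.
  destruct excluded_middle_informative as [e|n].
  - destruct (constructive_indefinite_description _ e) as [w [pr Hw]]. simpl.
    rewrite <- Hw, <- RInt_Reals. apply is_RInt_unique. exact H.
  - exfalso. apply n. exists (RiemannInt (ex_RInt_Reals_0 f a b (ex_intro _ v H))).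
    eexists. reflexivity.
Qed.

Lemma is_RInt_sum (f : nat -> R -> R) (I : nat -> R) (n : nat) a b :
  (forall k, (k <= n)%nat -> is_RInt (f k) a b (I k)) ->
  is_RInt (fun x => sum_f_R0 (fun k => f k x) n) a b (sum_f_R0 I n).
Proof.
  induction n; intros H; simpl.
  - apply H; lia.
  - apply (is_RInt_plus (V:=R_NormedModule)).
    + apply IHn. intros; apply H; lia.
    + apply H; lia.
Qed.

Lemma is_RInt_scal' (f : R -> R) a b c I :
  is_RInt f a b I -> is_RInt (fun x => c * f x) a b (c * I).
Proof. intros H. apply (is_RInt_scal (V:=R_NormedModule)). exact H. Qed.

Lemma is_RInt_scal_r (f : R -> R) a b c I :
  is_RInt f a b I -> is_RInt (fun x => f x * c) a b (I * c).
Proof. intros H. apply (is_RInt_ext (fun x => c * f x)).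
  intros x _; change (c * f x = f x * c); ring. replace (I*c) with (c*I) by ring. apply is_RInt_scal'. exact H. Qed.

Lemma powS' x n : x ^ (S n) = x ^ n * x.
Proof. simpl. ring. Qed.

Definition Tint (k m : nat) (t : R) : R := cos (t/2) ^ (2*k+1) * sin (t/2) ^ (2*m+1) * 2.
Definition Tv (k m : nat) : R := 2 * INR (fact k) * INR (fact m) / INR (fact (k+m+1)).

Lemma cont_cs k m x : continuous (fun t => cos (t/2) ^ k * sin (t/2) ^ m) x.
Proof. apply (@ex_derive_continuous R_AbsRing R_NormedModule). auto_derive. auto. Qed.

Lemma Tint_base m : is_RInt (Tint 0 m) 0 PI (Tv 0 m).
Proof.
  set (F := fun t => 4 * sin (t/2) ^ (2*m+2) / INR (2*m+2)).
  assert (HF : is_RInt (Tint 0 m) 0 PI (minus (F PI) (F 0))).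
  { apply (is_RInt_derive F).
    - intros x _. unfold F, Tint. auto_derive; [trivial|].
      replace (Init.Nat.pred (m + (m + 0) + 2)) with (2*m+1)%nat by lia.
      replace (m + (m+0) + 2)%nat with (2*m+2)%nat by lia.
      assert (0 < INR (2*m+2)) by (apply lt_0_INR; lia).
      replace (2*0+1)%nat with 1%nat by lia. rewrite pow_1. unfold Rdiv. field. lra.
    - intros x _. unfold Tint.
      apply (continuous_ext (fun t => cos (t/2) ^ (2*0+1) * sin (t/2) ^ (2*m+1) * 2)).
      intros; reflexivity.
      apply (@continuous_mult R_UniformSpace R_AbsRing). apply cont_cs. apply continuous_const. }
  replace (Tv 0 m) with (minus (F PI) (F 0)). exact HF.
  unfold F, Tv, minus, plus, opp; simpl.
  replace (PI/2) with (PI/2) by reflexivity. rewrite sin_PI2.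
  replace (0/2) with 0 by field. rewrite sin_0. rewrite pow1.
  rewrite pow_i by lia.
  replace (m+1)%nat with (S m) by lia. rewrite fact_simpl, mult_INR.
  assert (0 < INR (fact m)) by (apply lt_0_INR, lt_O_fact).
  replace (2*m+2)%nat with (S (S (2*m))) by lia.
  replace (m + (m + 0) + 2)%nat with (S (S (2*m))) by lia.
  rewrite !S_INR, mult_INR. simpl (INR 2).
  pose proof (pos_INR m). field. repeat split; lra.
Qed.
Lemma Tint_step k m : is_RInt (Tint k (S m)) 0 PI (Tv k (S m)) -> is_RInt (Tint (S k) m) 0 PI (Tv (S k) m).
Proof.
  intros Hk.
  set (G := fun t => cos (t/2) ^ (2*k+2) * sin (t/2) ^ (2*m+2)).
  set (dG := fun t => -(INR k+1) * (cos (t/2) ^ (2*k+1) * sin (t/2) ^ (2*m+1) * sin (t/2)^2)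
                      + (INR m + 1) * (cos (t/2) ^ (2*k+1) * cos (t/2)^2 * sin (t/2) ^ (2*m+1))).
  assert (HG : is_RInt dG 0 PI (minus (G PI) (G 0))).
  { apply (is_RInt_derive G).
    - intros x _. unfold G, dG. auto_derive; [trivial|].
      replace (Init.Nat.pred (k + (k + 0) + 2)) with (2*k+1)%nat by lia.
      replace (Init.Nat.pred (m + (m + 0) + 2)) with (2*m+1)%nat by lia.
      replace (k + (k + 0) + 2)%nat with (S (S (2*k))) by lia.
      replace (m + (m + 0) + 2)%nat with (S (S (2*m))) by lia.
      replace (S (S (2*k))) with (S (2*k+1)) by lia.
      replace (S (S (2*m))) with (S (2*m+1)) by lia.
      rewrite !powS'. rewrite !S_INR, !plus_INR, !mult_INR. simpl (INR 2). simpl (INR 1).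
      match goal with |- ?a = ?b => change (@eq R a b) end.
      unfold Rdiv. set (cc := cos (x * / 2)). set (ss := sin (x * / 2)). set (X := cc ^ (2*k+1)). set (Y := ss ^ (2*m+1)). simpl pow. field.
    - intros x _. unfold dG.
      apply (@ex_derive_continuous R_AbsRing R_NormedModule). auto_derive. auto. }
  assert (H2 : is_RInt (fun t => 2/(INR m+1) * dG t + (INR k+1)/(INR m+1) * Tint k (S m) t) 0 PI
                 (2/(INR m+1) * minus (G PI) (G 0) + (INR k+1)/(INR m+1) * Tv k (S m))).
  { apply (is_RInt_plus (V:=R_NormedModule)); apply is_RInt_scal'; assumption. }
  assert (Hm : 0 < INR m + 1) by (pose proof (pos_INR m); lra).
  replace (Tv (S k) m) with (2/(INR m+1) * minus (G PI) (G 0) + (INR k+1)/(INR m+1) * Tv k (S m)).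
  2:{
  change (minus (G PI) (G 0)) with (G PI - G 0). unfold G, Tv. replace (PI/2) with (PI/2) by reflexivity.
  rewrite cos_PI2. replace (0/2) with 0 by field. rewrite sin_0.
  rewrite !pow_i by lia.
  replace (S k + m + 1)%nat with (S (k + S m)) by lia.
  replace (k + S m + 1)%nat with (S (k + S m)) by lia.
  rewrite !fact_simpl, !mult_INR, !S_INR.
  assert (0 < INR (fact k)) by (apply lt_0_INR, lt_O_fact).
  assert (0 < INR (fact m)) by (apply lt_0_INR, lt_O_fact).
  assert (0 < INR (fact (k + S m))) by (apply lt_0_INR, lt_O_fact).
  pose proof (pos_INR (k + S m)). field. repeat split; lra. }
  eapply is_RInt_ext; [| exact H2]. intros x _. unfold dG, Tint.
  replace (2 * S k + 1)%nat with (S (S (2*k+1))) by lia.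
  replace (2 * S m + 1)%nat with (S (S (2*m+1))) by lia.
  rewrite !powS'. match goal with |- ?a = ?b => change (@eq R a b) end. cbv beta. field. lra.
Qed.

Lemma Tint_all k : forall m, is_RInt (Tint k m) 0 PI (Tv k m).
Proof.
  induction k; intros m. apply Tint_base. apply Tint_step, IHk.
Qed.

Lemma sc2pi k : sin (2 * INR k * PI) = 0 /\ cos (2 * INR k * PI) = 1.
Proof.
  pose proof (sin_period 0 k) as H1. pose proof (cos_period 0 k) as H2.
  rewrite Rplus_0_l, sin_0 in H1. rewrite Rplus_0_l, cos_0 in H2. auto.
Qed.

Lemma sc2pi_d k l : sin ((INR k - INR l) * (2*PI)) = 0 /\ cos ((INR k - INR l) * (2*PI)) = 1.
Proof.
  replace ((INR k - INR l) * (2*PI)) with (2 * INR k * PI - 2 * INR l * PI) by ring.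
  rewrite sin_minus, cos_minus. destruct (sc2pi k) as [a b]. destruct (sc2pi l) as [c d].
  rewrite a, b, c, d. split; ring.
Qed.

Lemma cos_int k l : is_RInt (fun s => cos ((INR k - INR l) * s)) 0 (2*PI)
   (if Nat.eq_dec k l then 2*PI else 0).
Proof.
  destruct (Nat.eq_dec k l) as [e|n].
  - subst. pose proof (is_RInt_const 0 (2*PI) (1:R)) as HC.
    change (scal (2*PI-0) (1:R)) with ((2*PI-0)*1) in HC.
    replace ((2*PI-0)*1) with (2*PI) in HC by ring.
    eapply is_RInt_ext; [| apply HC].
    intros x _. change (1 = cos ((INR l - INR l) * x)). replace ((INR l - INR l) * x) with 0 by ring.
    rewrite cos_0; reflexivity.
  - assert (Hd : INR k - INR l <> 0).
    { intro H. apply n. apply INR_eq. lra. }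
    set (F := fun s => sin ((INR k - INR l) * s) / (INR k - INR l)).
    assert (HV : minus (F (2*PI)) (F 0) = 0).
    2:{ enough (H : is_RInt (fun s => _) 0 (2*PI) (minus (F (2*PI)) (F 0))) by (rewrite HV in H; exact H).
    apply (is_RInt_derive F).
      * intros x _. unfold F. auto_derive; [trivial|].
       match goal with |- ?a = ?b => change (@eq R a b) end. field. exact Hd.
      * intros x _. apply (@ex_derive_continuous R_AbsRing R_NormedModule). auto_derive. auto. }
    change (@eq R (F (2*PI) - F 0) 0). unfold F.
      rewrite (proj1 (sc2pi_d k l)). rewrite Rmult_0_r, sin_0. field. exact Hd.
Qed.

Lemma sin_int k l : is_RInt (fun s => sin ((INR k - INR l) * s)) 0 (2*PI) 0.
Proof.
  destruct (Nat.eq_dec k l) as [e|n].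
  - subst. pose proof (is_RInt_const 0 (2*PI) (0:R)) as HC.
    change (scal (2*PI-0) (0:R)) with ((2*PI-0)*0) in HC.
    replace ((2*PI-0)*0) with 0 in HC by ring.
    eapply is_RInt_ext; [| apply HC].
    intros x _. change (0 = sin ((INR l - INR l) * x)). replace ((INR l - INR l) * x) with 0 by ring.
    rewrite sin_0; reflexivity.
  - assert (Hd : INR k - INR l <> 0).
    { intro H. apply n. apply INR_eq. lra. }
    set (F := fun s => - cos ((INR k - INR l) * s) / (INR k - INR l)).
    assert (HV : minus (F (2*PI)) (F 0) = 0).
    2:{ enough (H : is_RInt (fun s => _) 0 (2*PI) (minus (F (2*PI)) (F 0))) by (rewrite HV in H; exact H).
    apply (is_RInt_derive F).
      * intros x _. unfold F. auto_derive; [trivial|].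
       match goal with |- ?a = ?b => change (@eq R a b) end. field. exact Hd.
      * intros x _. apply (@ex_derive_continuous R_AbsRing R_NormedModule). auto_derive. auto. }
    change (@eq R (F (2*PI) - F 0) 0). unfold F.
      rewrite (proj2 (sc2pi_d k l)). rewrite Rmult_0_r, cos_0. field. exact Hd.
Qed.

Fixpoint csum (f : nat -> Cx) (n : nat) : Cx :=
  match n with O => f O | S m => Cxadd (csum f m) (f (S m)) end.
Fixpoint cprod (n : nat) (f : nat -> Cx) : Cx :=
  match n with O => Cx1 | S m => Cxmul (cprod m f) (f m) end.
Definition rscal (r : R) (w : Cx) : Cx := (r * fst w, r * snd w).

Lemma pair_eq (a b : Cx) : fst a = fst b -> snd a = snd b -> a = b.
Proof. destruct a, b; simpl; intros; subst; reflexivity. Qed.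

Ltac ceq := apply pair_eq; unfold Cxsub, Cxadd, Cxopp, Cxmul, rscal, Cx0, Cx1; simpl; ring.

Lemma fst_csum f n : fst (csum f n) = sum_f_R0 (fun k => fst (f k)) n.
Proof. induction n; simpl; [reflexivity| rewrite IHn; reflexivity]. Qed.
Lemma snd_csum f n : snd (csum f n) = sum_f_R0 (fun k => snd (f k)) n.
Proof. induction n; simpl; [reflexivity| rewrite IHn; reflexivity]. Qed.

Lemma csum_ext f g n : (forall k, (k <= n)%nat -> f k = g k) -> csum f n = csum g n.
Proof. induction n; intros H; simpl. apply H; lia. rewrite IHn, H; auto; intros; apply H; lia. Qed.

Lemma csum_mul_r w f n : Cxmul (csum f n) w = csum (fun k => Cxmul (f k) w) n.
Proof. induction n; simpl. reflexivity. rewrite <- IHn. ceq. Qed.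

Lemma csum_add f g n : csum (fun k => Cxadd (f k) (g k)) n = Cxadd (csum f n) (csum g n).
Proof. induction n; simpl. reflexivity. rewrite IHn. ceq. Qed.

Lemma csum_shift f n : csum f (S n) = Cxadd (f O) (csum (fun k => f (S k)) n).
Proof. induction n. simpl. reflexivity. change (csum f (S (S n))) with (Cxadd (csum f (S n)) (f (S (S n)))).
  rewrite IHn. simpl. ceq. Qed.

Lemma plc_high z n k : (n < k)%nat -> prod_lin_coef z n k = Cx0.
Proof.
  revert k; induction n; intros k Hk.
  - destruct k. lia. reflexivity.
  - destruct k. lia. simpl. rewrite (IHn k) by lia. rewrite (IHn (S k)) by lia. ceq.
Qed.

Lemma plc_top z n : prod_lin_coef z n n = Cx1.
Proof.
  induction n. reflexivity. simpl. rewrite IHn. rewrite (plc_high z n (S n)) by lia. ceq.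
Qed.

Definition ee (s : R) (k : nat) : Cx := (cos (INR k * s), sin (INR k * s)).

Definition Tm (z : nat -> Cx) (n : nat) (c sn s : R) (k : nat) : Cx :=
  rscal (c ^ k * sn ^ (n - k)) (Cxmul (prod_lin_coef z n k) (ee s k)).

Definition Lf (z : nat -> Cx) (c sn s : R) (i : nat) : Cx :=
  Cxsub (c * cos s, c * sin s) (sn * fst (z i), sn * snd (z i)).

Lemma expand z c sn s n : cprod n (Lf z c sn s) = csum (Tm z n c sn s) n.
Proof.
  induction n.
  - unfold Tm, ee. simpl. rewrite Rmult_0_l, cos_0, sin_0. ceq.
  - simpl cprod. rewrite IHn. rewrite csum_mul_r.
    transitivity (csum (fun k => Cxadd
        (rscal (c ^ k * sn ^ (S n - k)) (Cxmul (match k with O => Cx0 | S k' => prod_lin_coef z n k' end) (ee s k)))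
        (Cxopp (rscal (c ^ k * sn ^ (S n - k)) (Cxmul (Cxmul (z n) (prod_lin_coef z n k)) (ee s k))))) (S n)).
    2:{ apply csum_ext. intros k _. unfold Tm. simpl prod_lin_coef. ceq. }
    rewrite csum_add.
    rewrite csum_shift.
    change (csum (fun k => Cxopp (rscal (c ^ k * sn ^ (S n - k)) (Cxmul (Cxmul (z n) (prod_lin_coef z n k)) (ee s k)))) (S n))
      with (Cxadd (csum (fun k => Cxopp (rscal (c ^ k * sn ^ (S n - k)) (Cxmul (Cxmul (z n) (prod_lin_coef z n k)) (ee s k)))) n)
                  (Cxopp (rscal (c ^ S n * sn ^ (S n - S n)) (Cxmul (Cxmul (z n) (prod_lin_coef z n (S n))) (ee s (S n)))))).
    rewrite (plc_high z n (S n)) by lia.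
    transitivity (Cxadd (csum (fun k => rscal (c ^ S k * sn ^ (S n - S k)) (Cxmul (prod_lin_coef z n k) (ee s (S k)))) n)
                        (csum (fun k => Cxopp (rscal (c ^ k * sn ^ (S n - k)) (Cxmul (Cxmul (z n) (prod_lin_coef z n k)) (ee s k)))) n)).
    + rewrite <- csum_add. apply csum_ext. intros k Hk.
      unfold Tm, Lf, ee. rewrite S_INR.
      replace ((INR k + 1) * s) with (INR k * s + s) by ring.
      rewrite cos_plus, sin_plus.
      replace (S n - k)%nat with (S (n - k)) by lia. simpl (S n - S k)%nat.
      rewrite !powS'. ceq.
    + apply pair_eq; unfold Cxadd, Cxopp, Cxmul, rscal, Cx0; simpl; ring.
Qed.

Lemma norm2_mul a b : Cxnorm2 (Cxmul a b) = Cxnorm2 a * Cxnorm2 b.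
Proof. unfold Cxnorm2, Cxmul; simpl; ring. Qed.

Lemma norm2_cprod n f : Cxnorm2 (cprod n f) = prodR n (fun i => Cxnorm2 (f i)).
Proof. induction n; simpl. unfold Cxnorm2, Cx1; simpl; ring. rewrite norm2_mul, IHn. reflexivity. Qed.

Lemma sum_prod f g n : sum_f_R0 f n * sum_f_R0 g n = sum_f_R0 (fun k => sum_f_R0 (fun l => f k * g l) n) n.
Proof.
  rewrite Rmult_comm, scal_sum. apply sum_eq. intros k _.
  rewrite scal_sum. apply sum_eq. intros; ring.
Qed.

Lemma norm2_csum w n : Cxnorm2 (csum w n) =
  sum_f_R0 (fun k => sum_f_R0 (fun l => fst (w k) * fst (w l) + snd (w k) * snd (w l)) n) n.
Proof.
  unfold Cxnorm2. rewrite fst_csum, snd_csum.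
  replace (sum_f_R0 (fun k => fst (w k)) n ^ 2) with (sum_f_R0 (fun k => fst (w k)) n * sum_f_R0 (fun k => fst (w k)) n) by ring.
  replace (sum_f_R0 (fun k => snd (w k)) n ^ 2) with (sum_f_R0 (fun k => snd (w k)) n * sum_f_R0 (fun k => snd (w k)) n) by ring.
  rewrite !sum_prod, <- plus_sum. apply sum_eq. intros. rewrite <- plus_sum. reflexivity.
Qed.

Definition Kf (a : nat -> Cx) (k l : nat) (s : R) : R :=
  (fst (a k) * fst (a l) + snd (a k) * snd (a l)) * cos ((INR k - INR l) * s)
  + (fst (a k) * snd (a l) - snd (a k) * fst (a l)) * sin ((INR k - INR l) * s).

Lemma Tm_pair z n c sn s k l :
  fst (Tm z n c sn s k) * fst (Tm z n c sn s l) + snd (Tm z n c sn s k) * snd (Tm z n c sn s l)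
  = (c ^ k * sn ^ (n - k)) * (c ^ l * sn ^ (n - l)) * Kf (prod_lin_coef z n) k l s.
Proof.
  unfold Tm, Kf, rscal, Cxmul, ee; simpl.
  replace ((INR k - INR l) * s) with (INR k * s - INR l * s) by ring.
  rewrite cos_minus, sin_minus. ring.
Qed.

Lemma dist_point (x : R3) (zz : Cx) t s : on_sphere x -> pz x <> 1 -> stereo x = zz ->
  dist3 (sin t * cos s, sin t * sin s, cos t) x ^ 2 =
  4 * Cxnorm2 (Lf (fun _ => zz) (cos (t/2)) (sin (t/2)) s O) / (1 + Cxnorm2 zz).
Proof.
  destruct x as ((a, b), c). unfold on_sphere, px, py, pz, stereo; cbn [fst snd]. intros Hs Hc Hz. subst zz.
  unfold dist3, px, py, pz; cbn [fst snd]. rewrite pow2_sqrt by (apply Rplus_le_le_0_compat; [apply Rplus_le_le_0_compat|]; apply pow2_ge_0).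
  assert (Hd : 1 - c <> 0) by lra.
  assert (Ht : t = 2 * (t/2)) by field. rewrite Ht at 1 2 3. rewrite sin_2a, cos_2a.
  set (C := cos (t/2)). set (S := sin (t/2)).
  assert (HCS : C^2 + S^2 - 1 = 0). { unfold C, S. pose proof (sin2_cos2 (t/2)). unfold Rsqr in H. nra. }
  assert (Hcs : cos s ^ 2 + sin s ^ 2 - 1 = 0). { pose proof (sin2_cos2 s). unfold Rsqr in H. nra. }
  set (E := 2 * ((1 - c) * C^2 + (1 + c) * S^2 - 2 * S * C * (a * cos s + b * sin s))).
  transitivity E.
  - assert (HH : (2 * S * C * cos s - a) ^ 2 + (2 * S * C * sin s - b) ^ 2 + (C * C - S * S - c) ^ 2 - E
          = 4 * S^2 * C^2 * (cos s ^ 2 + sin s ^ 2 - 1) + (a ^ 2 + b ^ 2 + c ^ 2 - 1) + (C^2 + S^2 - 1)^2).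
    { unfold E. ring. }
    rewrite Hcs, HCS in HH. rewrite Hs in HH. lra.
  - unfold Lf, Cxnorm2, Cxsub, Cxadd, Cxopp; cbn [fst snd].
    assert (H1 : (a / (1 - c)) ^ 2 + (b / (1 - c)) ^ 2 = (1 + c) / (1 - c)).
    { replace ((a / (1 - c)) ^ 2 + (b / (1 - c)) ^ 2) with ((a^2+b^2) / (1 - c)^2) by (field; exact Hd).
      replace (a^2+b^2) with ((1-c)*(1+c)) by lra. field. exact Hd. }
    replace ((C * cos s + - (S * (a / (1 - c)))) ^ 2 + (C * sin s + - (S * (b / (1 - c)))) ^ 2)
      with (C^2 * (cos s ^ 2 + sin s ^ 2) + S^2 * ((a / (1 - c)) ^ 2 + (b / (1 - c)) ^ 2)
            - 2 * C * S * (a * cos s + b * sin s) / (1 - c)) by (unfold Rdiv; ring).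
    rewrite H1. replace (cos s ^ 2 + sin s ^ 2) with 1 by lra.
    unfold E. field. split; [exact Hd|].
    replace (1 - c + (1 + c)) with 2 by ring. lra.
Qed.

Lemma prodR_ext n f g : (forall i, (i < n)%nat -> f i = g i) -> prodR n f = prodR n g.
Proof. induction n; intros H; simpl. reflexivity. rewrite IHn, H; auto; intros; apply H; lia. Qed.

Lemma prodR_div n (g h : nat -> R) : prodR n (fun i => 4 * g i / h i) = 4 ^ n * prodR n g / prodR n h.
Proof. induction n; simpl. field. rewrite IHn. unfold Rdiv. rewrite !Rinv_mult. ring. Qed.

Lemma prodR_pos n f : (forall i, 0 < f i) -> 0 < prodR n f.
Proof. intros H; induction n; simpl. lra. apply Rmult_lt_0_compat; auto. Qed.

Lemma prodR_sqrt n f : (forall i, 0 <= f i) -> prodR n (fun i => sqrt (f i)) = sqrt (prodR n f).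
Proof.
  intros H; induction n; simpl. rewrite sqrt_1; reflexivity.
  rewrite IHn, sqrt_mult_alt. reflexivity.
  clear IHn. induction n; simpl. lra. apply Rmult_le_pos; auto.
Qed.

Lemma sum_scal_l c f n : c * sum_f_R0 f n = sum_f_R0 (fun k => c * f k) n.
Proof. rewrite scal_sum. apply sum_eq. intros; ring. Qed.

Definition rr (N k : nat) (t : R) : R := cos (t/2) ^ k * sin (t/2) ^ (N - k).
Definition Jkl (N k l : nat) : R := RInt (fun t => rr N k t * rr N l t * sin t) 0 PI.
Definition ccz (z : nat -> Cx) (N : nat) : R := prodR N (fun i => 1 + Cxnorm2 (z i)).

Lemma integrand_id N z x
  (Hsph : forall i, (i < N)%nat -> on_sphere (x i))
  (Hnp : forall i, (i < N)%nat -> pz (x i) <> 1)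
  (Hproj : forall i, (i < N)%nat -> stereo (x i) = z i) t s :
  prodR N (fun i => dist3 (sin t * cos s, sin t * sin s, cos t) (x i) ^ 2) * sin t =
  sum_f_R0 (fun k => sum_f_R0 (fun l =>
     (4 ^ N / ccz z N * Kf (prod_lin_coef z N) k l s) * (rr N k t * rr N l t * sin t)) N) N.
Proof.
  rewrite (prodR_ext N _ (fun i => 4 * Cxnorm2 (Lf z (cos (t/2)) (sin (t/2)) s i) / (1 + Cxnorm2 (z i)))).
  2:{ intros i Hi. rewrite (dist_point (x i) (z i) t s); auto. }
  rewrite prodR_div. rewrite <- norm2_cprod, expand, norm2_csum.
  fold (ccz z N).
  transitivity ((4 ^ N / ccz z N * sin t) * sum_f_R0 (fun k => sum_f_R0 (fun l =>
       fst (Tm z N (cos (t / 2)) (sin (t / 2)) s k) * fst (Tm z N (cos (t / 2)) (sin (t / 2)) s l) +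
       snd (Tm z N (cos (t / 2)) (sin (t / 2)) s k) * snd (Tm z N (cos (t / 2)) (sin (t / 2)) s l)) N) N).
  { unfold Rdiv. ring. }
  rewrite sum_scal_l. apply sum_eq. intros k _. rewrite sum_scal_l. apply sum_eq. intros l _.
  rewrite Tm_pair. unfold rr. ring.
Qed.

Lemma Jkl_correct N k l : is_RInt (fun t => rr N k t * rr N l t * sin t) 0 PI (Jkl N k l).
Proof.
  unfold Jkl. apply (RInt_correct (V:=R_CompleteNormedModule)). apply ex_RInt_continuous. intros t _. unfold rr.
  apply (@ex_derive_continuous R_AbsRing R_NormedModule). auto_derive. auto.
Qed.

Lemma inner_int N z x
  (Hsph : forall i, (i < N)%nat -> on_sphere (x i))
  (Hnp : forall i, (i < N)%nat -> pz (x i) <> 1)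
  (Hproj : forall i, (i < N)%nat -> stereo (x i) = z i) s :
  Defs.RInt (fun t => prodR N (fun i => dist3 (sin t * cos s, sin t * sin s, cos t) (x i) ^ 2) * sin t) 0 PI
  = sum_f_R0 (fun k => sum_f_R0 (fun l => (4 ^ N / ccz z N * Kf (prod_lin_coef z N) k l s) * Jkl N k l) N) N.
Proof.
  apply RInt_bridge.
  eapply is_RInt_ext. intros t _. symmetry. apply (integrand_id N z x Hsph Hnp Hproj t s).
  apply (is_RInt_sum (fun k t => sum_f_R0 (fun l =>
     (4 ^ N / ccz z N * Kf (prod_lin_coef z N) k l s) * (rr N k t * rr N l t * sin t)) N)).
  intros k _.
  apply (is_RInt_sum (fun l t => (4 ^ N / ccz z N * Kf (prod_lin_coef z N) k l s) * (rr N k t * rr N l t * sin t))).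
  intros l _. apply is_RInt_scal'. apply Jkl_correct.
Qed.

Definition Pkl (a : nat -> Cx) k l := fst (a k) * fst (a l) + snd (a k) * snd (a l).
Definition Qkl (a : nat -> Cx) k l := fst (a k) * snd (a l) - snd (a k) * fst (a l).

Lemma outer_int N z :
  is_RInt (fun s => sum_f_R0 (fun k => sum_f_R0 (fun l => (4 ^ N / ccz z N * Kf (prod_lin_coef z N) k l s) * Jkl N k l) N) N)
    0 (2*PI)
    (sum_f_R0 (fun k => sum_f_R0 (fun l => (4 ^ N / ccz z N * Jkl N k l) *
        (Pkl (prod_lin_coef z N) k l * (if Nat.eq_dec k l then 2*PI else 0)
         + Qkl (prod_lin_coef z N) k l * 0)) N) N).
Proof.
  apply (is_RInt_sum (fun k s => sum_f_R0 (fun l => (4 ^ N / ccz z N * Kf (prod_lin_coef z N) k l s) * Jkl N k l) N)).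
  intros k _.
  apply (is_RInt_sum (fun l s => (4 ^ N / ccz z N * Kf (prod_lin_coef z N) k l s) * Jkl N k l)).
  intros l _.
  eapply is_RInt_ext.
  { intros s _. instantiate (1 := fun s => (4 ^ N / ccz z N * Jkl N k l) *
        (Pkl (prod_lin_coef z N) k l * cos ((INR k - INR l) * s) + Qkl (prod_lin_coef z N) k l * sin ((INR k - INR l) * s))).
    match goal with |- ?a = ?b => change (@eq R a b) end. cbv beta. unfold Kf, Pkl, Qkl. ring. }
  apply is_RInt_scal'. apply (is_RInt_plus (V:=R_NormedModule)); apply is_RInt_scal'.
  apply cos_int. apply sin_int.
Qed.

Lemma sum_delta (g : nat -> R) c k n : (k <= n)%nat ->
  sum_f_R0 (fun l => g l * (if Nat.eq_dec k l then c else 0)) n = g k * c.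
Proof.
  induction n; intros Hk; simpl.
  - assert (k = 0%nat) by lia. subst. destruct (Nat.eq_dec 0 0); [reflexivity | congruence].
  - destruct (Nat.eq_dec k (S n)).
    + subst. rewrite (sum_eq _ (fun _ => 0)). rewrite sum_cte. ring.
      intros i Hi. destruct (Nat.eq_dec (S n) i). lia. ring.
    + rewrite IHn by lia. ring.
Qed.

Lemma Jkk N k : (k <= N)%nat -> Jkl N k k = Tv k (N - k).
Proof.
  intros Hk. unfold Jkl. apply is_RInt_unique. eapply is_RInt_ext; [| apply Tint_all].
  intros t _. change (Tint k (N-k) t = rr N k t * rr N k t * sin t). unfold Tint, rr.
  replace (sin t) with (2 * sin (t/2) * cos (t/2)) by (rewrite <- sin_2a; f_equal; field).
  replace (2*k+1)%nat with (S (k+k)) by lia. replace (2*(N-k)+1)%nat with (S ((N-k)+(N-k))) by lia.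
  rewrite !powS', !pow_add. ring.
Qed.

Lemma Tv_binom N k : (k <= N)%nat -> Tv k (N - k) = 2 / (INR N + 1) * / Binomial.C N k.
Proof.
  intros Hk. unfold Tv, Binomial.C. replace (k + (N-k) + 1)%nat with (S N) by lia.
  rewrite fact_simpl, mult_INR, S_INR.
  assert (0 < INR (fact k)) by (apply lt_0_INR, lt_O_fact).
  assert (0 < INR (fact N)) by (apply lt_0_INR, lt_O_fact).
  assert (0 < INR (fact (N-k))) by (apply lt_0_INR, lt_O_fact).
  pose proof (pos_INR N).
  field. repeat split; lra.
Qed.

Lemma C_pos N k : 0 < Binomial.C N k.
Proof.
  unfold Binomial.C.
  assert (0 < INR (fact k)) by (apply lt_0_INR, lt_O_fact).
  assert (0 < INR (fact N)) by (apply lt_0_INR, lt_O_fact).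
  assert (0 < INR (fact (N-k))) by (apply lt_0_INR, lt_O_fact).
  apply Rdiv_lt_0_compat; auto. apply Rmult_lt_0_compat; auto.
Qed.

Definition Bsum (N : nat) (z : nat -> Cx) : R :=
  sum_f_R0 (fun i => / Binomial.C N i * Cxnorm2 (prod_lin_coef z N i)) N.

Lemma ccz_pos z N : 0 < ccz z N.
Proof. unfold ccz. apply prodR_pos. intros i. unfold Cxnorm2. pose proof (pow2_ge_0 (fst (z i))).
  pose proof (pow2_ge_0 (snd (z i))). lra. Qed.

Lemma sphere_val N z x
  (Hsph : forall i, (i < N)%nat -> on_sphere (x i))
  (Hnp : forall i, (i < N)%nat -> pz (x i) <> 1)
  (Hproj : forall i, (i < N)%nat -> stereo (x i) = z i) :
  sphere_integral (fun p => prodR N (fun i => dist3 p (x i) ^ 2)) = 4 ^ N / ccz z N / (INR N + 1) * Bsum N z.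
Proof.
  unfold sphere_integral. cbv beta.
  rewrite (functional_extensionality _ _ (inner_int N z x Hsph Hnp Hproj)).
  rewrite (RInt_bridge _ _ _ _ (outer_int N z)).
  pose proof (ccz_pos z N). pose proof (pos_INR N). pose proof PI_RGT_0.
  unfold Bsum. rewrite sum_scal_l, scal_sum. apply sum_eq. intros k Hk.
  rewrite (sum_eq _ (fun l => (4 ^ N / ccz z N * Jkl N k l * Pkl (prod_lin_coef z N) k l) * (if Nat.eq_dec k l then 2 * PI else 0))).
  2:{ intros l _. ring. }
  rewrite sum_delta by exact Hk.
  rewrite Jkk, Tv_binom by exact Hk.
  unfold Pkl, Cxnorm2. pose proof (C_pos N k). field. repeat split; lra.
Qed.

Lemma bw1 w : bw_norm 1 (lin_coef w) = sqrt (1 + Cxnorm2 w).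
Proof.
  unfold bw_norm, lin_coef. simpl sum_f_R0. f_equal.
  unfold Binomial.C, Cxnorm2, Cxopp, Cx1. simpl. field.
Qed.

Lemma Bsum_pos N z : 0 < Bsum N z.
Proof.
  unfold Bsum. destruct N.
  - simpl. unfold Binomial.C, Cxnorm2, Cx1; simpl. lra.
  - rewrite tech5. rewrite plc_top.
    assert (0 <= sum_f_R0 (fun i => / Binomial.C (S N) i * Cxnorm2 (prod_lin_coef z (S N) i)) N).
    { apply cond_pos_sum. intros n. apply Rmult_le_pos. left. apply Rinv_0_lt_compat, C_pos.
      unfold Cxnorm2. pose proof (pow2_ge_0 (fst (prod_lin_coef z (S N) n))).
      pose proof (pow2_ge_0 (snd (prod_lin_coef z (S N) n))). lra. }
    assert (0 < / Binomial.C (S N) (S N) * Cxnorm2 Cx1).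
    { apply Rmult_lt_0_compat. apply Rinv_0_lt_compat, C_pos. unfold Cxnorm2, Cx1; simpl; lra. }
    lra.
Qed.

Theorem theorem4p2 (N : nat) (z : nat -> Cx) (x : nat -> R3)
  (Hsph : forall i, (i < N)%nat -> on_sphere (x i))
  (Hnp : forall i, (i < N)%nat -> pz (x i) <> 1)
  (Hproj : forall i, (i < N)%nat -> stereo (x i) = z i) :
  prodR N (fun i => bw_norm 1 (lin_coef (z i))) / bw_norm N (prod_lin_coef z N)
  = 2 ^ N / sqrt (INR N + 1) *
    / sqrt (sphere_integral (fun p => prodR N (fun i => dist3 p (x i) ^ 2))).
Proof.
  rewrite (sphere_val N z x Hsph Hnp Hproj).
  rewrite (prodR_ext N _ (fun i => sqrt (1 + Cxnorm2 (z i)))) by (intros; apply bw1).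
  rewrite prodR_sqrt.
  2:{ intros i. unfold Cxnorm2. pose proof (pow2_ge_0 (fst (z i))). pose proof (pow2_ge_0 (snd (z i))). lra. }
  fold (ccz z N). unfold bw_norm. fold (Bsum N z).
  pose proof (ccz_pos z N) as Hc. pose proof (Bsum_pos N z) as HB. pose proof (pos_INR N) as HN.
  assert (H4 : 4 ^ N = (2 ^ N) ^ 2).
  { rewrite <- pow_mult, Nat.mul_comm, pow_mult. f_equal. ring. }
  assert (H2 : 0 < 2 ^ N) by (apply pow_lt; lra).
  replace (4 ^ N / ccz z N / (INR N + 1) * Bsum N z) with ((2 ^ N) ^ 2 * (Bsum N z / (ccz z N * (INR N + 1)))).
  2:{ rewrite H4. field. lra. }
  rewrite sqrt_mult_alt by (apply pow2_ge_0).
  rewrite sqrt_pow2 by lra.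
  rewrite sqrt_div_alt by (apply Rmult_lt_0_compat; lra).
  rewrite sqrt_mult_alt by lra.
  assert (0 < sqrt (ccz z N)) by (apply sqrt_lt_R0; lra).
  assert (0 < sqrt (Bsum N z)) by (apply sqrt_lt_R0; lra).
  assert (0 < sqrt (INR N + 1)) by (apply sqrt_lt_R0; lra).
  field. repeat split; lra.
Qed.
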